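(* Let $V=\{(a_1,a_2,\ldots)\mid a_i\in\mathbb{C},\ \sum_i|a_i|^2<\infty\}$ with quadratic form $f((a_i))=\sum_i a_i^2$, let $A=Cl(V,f)$ be its Clifford algebra, and let $\mathcal{V}=\{v_i\mid i\ge1\}$, where $v_i$ is the sequence with $1$ in position $i$ and $0$ elsewhere. Then the centralizer of $\mathcal{V}$ in $A$ is $\mathbb{C}\cdot1$.
   Context: The Clifford algebra $Cl(V,f)$ is the unital associative $\mathbb{C}$-algebra generated by $V$ and $1$ subject to $v^2=f(v)\cdot1$ for all $v\in V$. The centralizer of a subset $S$ is $\{a\in A\mid as=sa \text{ for all } s\in S\}$. *)

(* Defs.v *)
From HB Require Import structures.
From mathcomp Require Import all_boot all_order all_algebra.
From mathcomp Require Import all_classical all_reals all_analysis.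
From mathcomp Require Import complex.
Set Implicit Arguments. Unset Strict Implicit. Unset Printing Implicit Defensive.
Import Order.TTheory GRing.Theory Num.Theory.
Import numFieldNormedType.Exports.
Local Open Scope ring_scope.

(* square-summable complex sequences (index i >= 1 of the paper is n = i-1 here) *)
Definition ell2 (R : realType) (a : nat -> R[i]) : Prop :=
  cvgn (series (fun n => complex.Re (a n) ^+ 2 + complex.Im (a n) ^+ 2)).

Definition l2 (R : realType) := {a : nat -> R[i] | ell2 a}.

(* the quadratic form f((a_n)) = sum_n a_n^2, the complex series being summed
   through its real and imaginary parts (it converges absolutely on V) *)
Definition qform (R : realType) (a : nat -> R[i]) : R[i] :=
  Complex (limn (series (fun n => complex.Re (a n ^+ 2))))
          (limn (series (fun n => complex.Im (a n ^+ 2)))).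

Definition delta_seq (R : realType) (i : nat) : nat -> R[i] :=
  fun n => (n == i)%:R.

Lemma ell2_delta (R : realType) (i : nat) : ell2 (delta_seq R i).
Proof.
rewrite /ell2; apply: (@is_cvg_near_cst _ _ (1:R)).
exists i.+1 => // n /= hn.
rewrite seriesEnat /=.
rewrite big_mkord (bigD1 (Ordinal hn)) //= big1 ?addr0.
  by rewrite /delta_seq eqxx /= expr1n expr0n addr0.
move=> k hk; rewrite /delta_seq.
have -> : (nat_of_ord k == i) = false.
  by apply/negbTE; apply: contra hk => /eqP e; apply/eqP/val_inj.
by rewrite /= expr0n addr0.
Qed.

Definition basis_vec (R : realType) (i : nat) : l2 R :=
  exist _ (delta_seq R i) (@ell2_delta R i).

Definition clifford_map (R : realType) (B : algType R[i]) (j : l2 R -> B) : Prop :=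
  (forall (c : R[i]) (x y z : l2 R),
      proj1_sig z = (fun n => c * proj1_sig x n + proj1_sig y n) ->
      j z = c *: j x + j y)
  /\ (forall x : l2 R, j x * j x = (qform (proj1_sig x))%:A).

Definition alg_hom (R : realType) (A B : algType R[i]) (phi : A -> B) : Prop :=
  (forall (c : R[i]) (x y : A), phi (c *: x + y) = c *: phi x + phi y)
  /\ (forall x y : A, phi (x * y) = phi x * phi y)
  /\ phi 1 = 1.

(* (A, iota) is the Clifford algebra Cl(V,f): the universal unital C-algebra
   generated by V with v^2 = f(v) 1 (presentation = universal property). *)
Definition is_clifford (R : realType) (A : algType R[i]) (iota : l2 R -> A) : Prop :=
  clifford_map iota /\
  forall (B : algType R[i]) (j : l2 R -> B), clifford_map j ->
    (exists phi : A -> B, alg_hom phi /\ forall x, phi (iota x) = j x) /\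
    (forall phi1 phi2 : A -> B, alg_hom phi1 -> alg_hom phi2 ->
       (forall x, phi1 (iota x) = j x) -> (forall x, phi2 (iota x) = j x) ->
       forall a, phi1 a = phi2 a).

(* Main.v *)
Require Import Defs.
From HB Require Import structures.
From mathcomp Require Import all_boot all_order all_algebra.
From mathcomp Require Import all_classical all_reals all_analysis.
From mathcomp Require Import complex.
From mathcomp Require Import ring lra.
Set Implicit Arguments. Unset Strict Implicit. Unset Printing Implicit Defensive.
Import Order.TTheory GRing.Theory Num.Theory.
Import numFieldNormedType.Exports.
Local Open Scope classical_set_scope.
Local Open Scope ring_scope.

Section An.
Variable R : realType.
Lemma ReM (a b : R[i]) : complex.Re (a * b) = complex.Re a * complex.Re b - complex.Im a * complex.Im b.
Proof. by case: a => a1 a2; case: b => b1 b2. Qed.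
Lemma ImM (a b : R[i]) : complex.Im (a * b) = complex.Re a * complex.Im b + complex.Im a * complex.Re b.
Proof. by case: a => a1 a2; case: b => b1 b2. Qed.
Lemma ReD (a b : R[i]) : complex.Re (a + b) = complex.Re a + complex.Re b.
Proof. by case: a => a1 a2; case: b => b1 b2. Qed.
Lemma ImD (a b : R[i]) : complex.Im (a + b) = complex.Im a + complex.Im b.
Proof. by case: a => a1 a2; case: b => b1 b2. Qed.

Lemma ell2_0 : ell2 (fun _ : nat => (0 : R[i])).
Proof.
rewrite /ell2; apply: (@is_cvg_near_cst _ _ (0:R)); near=> n.
by rewrite /series /= big1 // => i _; rewrite expr0n addr0.
Unshelve. all: by end_near.
Qed.

Lemma ell2_lin (c : R[i]) (x y : nat -> R[i]) : ell2 x -> ell2 y ->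
  ell2 (fun n => c * x n + y n).
Proof.
rewrite /ell2 => hx hy.
pose K := complex.Re c ^+ 2 + complex.Im c ^+ 2.
have K0 : 0 <= K by rewrite /K addr_ge0 // sqr_ge0.
apply: (@series_le_cvg _ _ ((2 * K) *: (fun n => complex.Re (x n) ^+ 2 + complex.Im (x n) ^+ 2)
   + 2 *: (fun n => complex.Re (y n) ^+ 2 + complex.Im (y n) ^+ 2))).
- by move=> n; rewrite addr_ge0 // sqr_ge0.
- move=> n; rewrite /= !fctE; apply: addr_ge0; apply: mulr_ge0;
    rewrite ?addr_ge0 ?sqr_ge0 ?mulr_ge0 //.

- move=> n; rewrite /= !fctE ReD ImD ReM ImM /K.
  set a := complex.Re c; set b := complex.Im c; set u := complex.Re (x n);
  set v := complex.Im (x n); set p := complex.Re (y n); set q := complex.Im (y n).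
  rewrite -subr_ge0.
  match goal with |- is_true (0 <= ?e) => have -> : e = (a*u - b*v - p)^+2 + (a*v+b*u - q)^+2 by rewrite /GRing.scale /=; ring end.
  by rewrite addr_ge0 ?sqr_ge0.
- by apply: is_cvg_seriesD; apply: is_cvg_seriesZ.
Qed.

Lemma cvg_series_delta (n : nat) (c : R) :
  series (fun k => (k == n)%:R * c) @ \oo --> c.
Proof.
apply: cvg_near_cst; exists n.+1 => // N /= hN.
rewrite /series /= (bigD1_seq n) ?mem_iota ?iota_uniq ?add0n //=.
rewrite eqxx mul1r big1 ?addr0 // => k /negbTE ->; try by rewrite mul0r.
by rewrite subn0.
Qed.

Lemma sq_cvg_parts (u : nat -> R[i]) : ell2 u ->
  cvgn (series (fun n => complex.Re (u n) ^+ 2)) /\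
  cvgn (series (fun n => complex.Im (u n) ^+ 2)).
Proof.
move=> hu; split; apply: series_le_cvg hu => n; rewrite ?sqr_ge0 ?addr_ge0 ?sqr_ge0 //.
- by rewrite lerDl sqr_ge0.
- by rewrite lerDr sqr_ge0.
Qed.

Lemma cvg_Re2 (u : nat -> R[i]) : ell2 u ->
  cvgn (series (fun n => complex.Re (u n ^+ 2))).
Proof.
move=> /[dup] hu /sq_cvg_parts [h1 h2].
have -> : (fun n => complex.Re (u n ^+ 2)) =
  (fun n => complex.Re (u n) ^+ 2) - (fun n => complex.Im (u n) ^+ 2).
  by apply: funext => n; rewrite !fctE expr2 ReM -!expr2.
exact: is_cvg_seriesB.
Qed.

Lemma cvg_Im2 (u : nat -> R[i]) : ell2 u ->
  cvgn (series (fun n => complex.Im (u n ^+ 2))).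
Proof.
move=> /[dup] hu /sq_cvg_parts [h1 h2].
have h3 : cvgn (series (fun n => (complex.Re (u n) + complex.Im (u n)) ^+ 2)).
  apply: (@series_le_cvg _ _ (2 *: (fun n => complex.Re (u n) ^+ 2 + complex.Im (u n) ^+ 2))).
  - by move=> n; rewrite sqr_ge0.
  - by move=> n; rewrite !fctE mulr_ge0 // addr_ge0 // sqr_ge0.
  - move=> n; rewrite !fctE -subr_ge0.
    match goal with |- is_true (0 <= ?e) => have -> : e = (complex.Re (u n) - complex.Im (u n))^+2 by rewrite /GRing.scale /=; ring end.
    exact: sqr_ge0.
  - exact: is_cvg_seriesZ.
have -> : (fun n => complex.Im (u n ^+ 2)) =
  (fun n => (complex.Re (u n) + complex.Im (u n)) ^+ 2) - (fun n => complex.Re (u n) ^+ 2)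
   - (fun n => complex.Im (u n) ^+ 2).
  apply: funext => n; rewrite !fctE expr2 ImM; ring.
by apply: is_cvg_seriesB => //; apply: is_cvg_seriesB.
Qed.

Lemma complex_ext (x y : R[i]) : complex.Re x = complex.Re y -> complex.Im x = complex.Im y -> x = y.
Proof. by case: x => a b; case: y => c d /= -> ->. Qed.

Lemma delta_sq (n k : nat) (c : R[i]) : (delta_seq R n k + c) ^+ 2 = c ^+ 2 + (k == n)%:R * (1 + 2 * c).
Proof.
rewrite /delta_seq; case: eqP => _; rewrite ?mul1r ?mul0r ?addr0 ?add0r //.
by rewrite sqrrD expr1n mul1r; ring.
Qed.

Lemma qform_delta (n : nat) : qform (delta_seq R n) = 1.
Proof.
apply: complex_ext; rewrite /qform /=.
  have -> : (fun k => complex.Re (delta_seq R n k ^+ 2)) = (fun k => (k == n)%:R * 1).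
    apply: funext => k; have := delta_sq n k 0; rewrite addr0 => ->.
    rewrite expr2 !mulr0 addr0 add0r !mulr1; by case: (k == n).
  apply: cvg_lim; [exact: Rhausdorff| exact: cvg_series_delta].
have -> : (fun k => complex.Im (delta_seq R n k ^+ 2)) = (fun k => (k == n)%:R * 0).
  apply: funext => k; have := delta_sq n k 0; rewrite addr0 => ->.
  rewrite expr2 !mulr0 addr0 add0r !mulr1; by case: (k == n).
apply: cvg_lim; [exact: Rhausdorff| exact: cvg_series_delta].
Qed.

Lemma qform_shift (n : nat) (u : nat -> R[i]) : ell2 u ->
  qform (fun k => 1 * delta_seq R n k + u k) = qform u + (1 + 2 * u n).
Proof.
move=> hu; apply: complex_ext; rewrite /qform; [rewrite ReD /= | rewrite ImD /=].
  have -> : (fun k => complex.Re ((1 * delta_seq R n k + u k) ^+ 2)) =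
    (fun k => complex.Re (u k ^+ 2)) + (fun k => (k == n)%:R * complex.Re (1 + 2 * u n)).
    apply: funext => k; rewrite mul1r delta_sq !fctE ReD; congr (_ + _).
    by case: eqP => [->|_]; rewrite ?mul1r ?mul0r.
  rewrite lim_seriesD; [| exact: cvg_Re2 | by apply: cvgP; apply: cvg_series_delta].
  congr (_ + _); apply: cvg_lim; [exact: Rhausdorff| exact: cvg_series_delta].
have -> : (fun k => complex.Im ((1 * delta_seq R n k + u k) ^+ 2)) =
  (fun k => complex.Im (u k ^+ 2)) + (fun k => (k == n)%:R * complex.Im (1 + 2 * u n)).
  apply: funext => k; rewrite mul1r delta_sq !fctE ImD; congr (_ + _).
  by case: eqP => [->|_]; rewrite ?mul1r ?mul0r.
rewrite lim_seriesD; [| exact: cvg_Im2 | by apply: cvgP; apply: cvg_series_delta].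
congr (_ + _); apply: cvg_lim; [exact: Rhausdorff| exact: cvg_series_delta].
Qed.
End An.

Section Alg.
Variables (R : realType) (A : algType R[i]) (iota : l2 R -> A).
Hypothesis Hlin : forall (c : R[i]) (x y z : l2 R),
      proj1_sig z = (fun n => c * proj1_sig x n + proj1_sig y n) ->
      iota z = c *: iota x + iota y.
Hypothesis Hsq : forall x : l2 R, iota x * iota x = (qform (proj1_sig x))%:A.
Variable alpha : A -> A.
Hypothesis HaL : forall (c : R[i]) (x y : A), alpha (c *: x + y) = c *: alpha x + alpha y.
Hypothesis HaM : forall x y : A, alpha (x * y) = alpha x * alpha y.
Hypothesis Ha1 : alpha 1 = 1.
Hypothesis Hai : forall x, alpha (iota x) = - iota x.

Lemma aD x y : alpha (x + y) = alpha x + alpha y.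
Proof. by have := HaL 1 x y; rewrite !scale1r. Qed.
Lemma a0 : alpha 0 = 0.
Proof. by apply: (addrI (alpha 0)); rewrite -aD !addr0. Qed.
Lemma aZ c x : alpha (c *: x) = c *: alpha x.
Proof. by rewrite -[c *: x]addr0 HaL a0 !addr0. Qed.
Lemma aN x : alpha (- x) = - alpha x.
Proof. by rewrite -scaleN1r aZ scaleN1r. Qed.
Lemma aB x y : alpha (x - y) = alpha x - alpha y.
Proof. by rewrite aD aN. Qed.
Lemma aC c : alpha (c%:A) = c%:A.
Proof. by rewrite aZ Ha1. Qed.

Definition e n := iota (basis_vec R n).

Definition lcomb (c : R[i]) (x y : l2 R) : l2 R :=
  exist _ (fun n => c * proj1_sig x n + proj1_sig y n) (ell2_lin (c:=c) (proj2_sig x) (proj2_sig y)).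

Lemma iota_lcomb c x y : iota (lcomb c x y) = c *: iota x + iota y.
Proof. exact: Hlin. Qed.

Lemma iota_zero z : (forall n, proj1_sig z n = 0) -> iota z = 0.
Proof.
move=> hz; have h : iota z = -1 *: iota z + iota z.
  by apply: Hlin; apply: funext => n; rewrite hz mulr0 addr0.
by rewrite h scaleN1r addNr.
Qed.

Lemma scalA_mul (c : R[i]) (x : A) : c%:A * x = c *: x.
Proof. by rewrite -scalerAl mul1r. Qed.
Lemma mul_scalA (c : R[i]) (x : A) : x * c%:A = c *: x.
Proof. by rewrite -scalerAr mulr1. Qed.

Lemma zh (V : zmodType) (a x y q t : V) : a + x + (y + q) = q + (a + t) -> x + y = t.
Proof.
move=> h; apply: (addrI (a + q)).
rewrite [q + _]addrC addrA in h.
by rewrite [RHS]addrAC -h -!addrA (addrCA q) (addrC q).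
Qed.

Lemma anti_e n u : e n * iota u + iota u * e n = (2 * proj1_sig u n)%:A.
Proof.
have h := Hsq (lcomb 1 (basis_vec R n) u).
have hq : qform (proj1_sig (lcomb 1 (basis_vec R n) u)) =
   qform (proj1_sig u) + (1 + 2 * proj1_sig u n) := qform_shift n (proj2_sig u).
rewrite hq iota_lcomb scale1r mulrDl !mulrDr !Hsq /= qform_delta in h.
rewrite !scalerDl in h; rewrite /e; exact: zh h.
Qed.

Lemma zh2 (V : zmodType) (a x y q w : V) : a + x + (y + q) = w -> x + y = w - a - q.
Proof.
move=> <-.
have -> : a + x + (y + q) = x + y + q + a.
  by rewrite (addrC a x) -!addrA (addrCA a) [q + a]addrC.
by rewrite addrK addrK.
Qed.

Lemma anti_gen u v : exists s, iota u * iota v + iota v * iota u = s%:A.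
Proof.
have h := Hsq (lcomb 1 u v).
rewrite iota_lcomb scale1r mulrDl !mulrDr !Hsq in h.
exists (qform (proj1_sig (lcomb 1 u v)) - qform (proj1_sig u) - qform (proj1_sig v)).
by rewrite !scalerBl; apply: zh2 h.
Qed.

Lemma e_sq n : e n * e n = 1.
Proof. by rewrite /e Hsq /= qform_delta scale1r. Qed.

Lemma e_anti n m : n != m -> e n * e m = - (e m * e n).
Proof.
move=> nm; have h := anti_e n (basis_vec R m).
rewrite /= /delta_seq (negbTE nm) mulr0 scale0r -/(e m) in h.
by apply/eqP; rewrite -addr_eq0 h.
Qed.

Lemma alpha_e n : alpha (e n) = - e n.
Proof. exact: Hai. Qed.

Inductive inA (G : A -> Prop) : nat -> A -> Prop :=
 | A1 d : inA G d 1
 | AD d x y : inA G d x -> inA G d y -> inA G d (x + y)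
 | AZ d (c : R[i]) x : inA G d x -> inA G d (c *: x)
 | AM d g x : G g -> inA G d x -> inA G d.+1 (g * x).

Lemma inA_mono G d x : inA G d x -> forall d', (d <= d')%N -> inA G d' x.
Proof.
elim=> {d x} [d|d x y _ IHx _ IHy|d c x _ IH|d g x Gg _ IH] d' hd.
- exact: A1.
- by apply: AD; [apply: IHx | apply: IHy].
- by apply: AZ; apply: IH.
- case: d' hd => // d' hd; apply: AM => //; exact: IH.
Qed.

Lemma inA_sub (G G' : A -> Prop) d x : (forall g, G g -> G' g) -> inA G d x -> inA G' d x.
Proof.
move=> hG; elim=> {d x} [d|d x y _ IHx _ IHy|d c x _ IH|d g x Gg _ IH].
- exact: A1.
- exact: AD.
- exact: AZ.
- by apply: AM => //; apply: hG.
Qed.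

Lemma inA_0 G d : inA G d 0.
Proof. by rewrite -(scale0r (1 : A)); apply: AZ; apply: A1. Qed.

Lemma inA_C G d c : inA G d (c%:A).
Proof. by apply: AZ; apply: A1. Qed.

Lemma inA_N G d x : inA G d x -> inA G d (- x).
Proof. by move=> h; rewrite -scaleN1r; apply: AZ. Qed.

Lemma inA_B G d x y : inA G d x -> inA G d y -> inA G d (x - y).
Proof. by move=> hx hy; apply: AD => //; apply: inA_N. Qed.

Lemma inA_sum G d k (F : 'I_k -> A) : (forall i, inA G d (F i)) -> inA G d (\sum_(i < k) F i).
Proof.
move=> hF; elim/big_ind: _ => //; first exact: inA_0.
by move=> x y; apply: AD.
Qed.

Lemma inA_mul G d x : inA G d x -> forall d' y, inA G d' y -> inA G (d + d') (x * y).
Proof.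
elim=> {d x} [d|d x y _ IHx _ IHy|d c x _ IH|d g x Gg _ IH] d' z hz.
- by rewrite mul1r; apply: (inA_mono hz); rewrite leq_addl.
- by rewrite mulrDl; apply: AD; [apply: IHx | apply: IHy].
- by rewrite -scalerAl; apply: AZ; apply: IH.
- by rewrite -mulrA addSn; apply: AM => //; apply: IH.
Qed.

Lemma inA_alpha G d x : (forall g, G g -> alpha g = - g) -> inA G d x -> inA G d (alpha x).
Proof.
move=> hG; elim=> {d x} [d|d x y _ IHx _ IHy|d c x _ IH|d g x Gg _ IH].
- by rewrite Ha1; apply: A1.
- by rewrite aD; apply: AD.
- by rewrite aZ; apply: AZ.
- by rewrite HaM hG // mulNr; apply: inA_N; apply: AM.
Qed.

Lemma inA_empty G d x : (forall g, ~ G g) -> inA G d x -> exists c, x = c%:A.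
Proof.
move=> hG; elim=> {d x} [d|d x y _ [c1 ->] _ [c2 ->]|d c x _ [c1 ->]|d g x Gg _ IH].
- by exists 1; rewrite scale1r.
- by exists (c1 + c2); rewrite scalerDl.
- by exists (c * c1); rewrite scalerA.
- by case: (hG g).
Qed.

Lemma inA0 G x : inA G 0 x -> exists c, x = c%:A.
Proof.
have : forall d, inA G d x -> d = 0%N -> exists c, x = c%:A.
  move=> d; elim=> {d x} [d|d x y _ IHx _ IHy|d c x _ IH|d g x Gg _ IH] h0.
  - by exists 1; rewrite scale1r.
  - by case: (IHx h0) => c1 ->; case: (IHy h0) => c2 ->; exists (c1 + c2); rewrite scalerDl.
  - by case: (IH h0) => c1 ->; exists (c * c1); rewrite scalerA.
  - by [].
by move=> h /h; apply.
Qed.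

Definition D (E x : A) := E * x - alpha x * E.

Lemma D_lin E c x y : D E (c *: x + y) = c *: D E x + D E y.
Proof.
rewrite /D HaL mulrDr mulrDl -scalerAr -scalerAl scalerBr.
by rewrite opprD addrACA.
Qed.
Lemma D_add E x y : D E (x + y) = D E x + D E y.
Proof. by have := D_lin E 1 x y; rewrite !scale1r. Qed.
Lemma D_0 E : D E 0 = 0.
Proof. by rewrite /D a0 mulr0 mul0r subrr. Qed.
Lemma D_scale E c x : D E (c *: x) = c *: D E x.
Proof. by have := D_lin E c x 0; rewrite !addr0 D_0 addr0. Qed.
Lemma D_1 E : D E 1 = 0.
Proof. by rewrite /D Ha1 mulr1 mul1r subrr. Qed.
Lemma D_C E c : D E (c%:A) = 0.
Proof. by rewrite D_scale D_1 scaler0. Qed.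
Lemma D_mul E g x : alpha g = - g -> D E (g * x) = (E * g + g * E) * x - g * D E x.
Proof.
move=> hg; rewrite /D HaM hg mulrDl mulrBr !mulrA mulNr mulNr opprK.
by rewrite opprB addrACA subrr addr0.
Qed.

Lemma two_neq0 : (2 : R[i]) != 0.
Proof. by rewrite pnatr_eq0. Qed.

Lemma half0 (x : A) : x + x = 0 -> x = 0.
Proof.
move=> h; have : (2 : R[i])^-1 *: (2 *: x) = 0.
  by rewrite scaler_nat [x *+ 2]mulr2n h scaler0.
by rewrite scalerA mulVf ?two_neq0 // scale1r.
Qed.

Definition Gv g := exists u, g = iota u.

Lemma Gv_odd g : Gv g -> alpha g = - g.
Proof. by case=> u ->; apply: Hai. Qed.

Lemma Gv_anti n g : Gv g -> exists s, e n * g + g * e n = s%:A.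
Proof. by case=> u ->; exists (2 * proj1_sig u n); apply: anti_e. Qed.

Lemma D_deg n d x : inA Gv d x -> inA Gv d.-1 (D (e n) x).
Proof.
elim=> {d x} [d|d x y _ IHx _ IHy|d c x _ IH|d g x Gg hx IH].
- rewrite D_1; exact: inA_0.
- rewrite D_add; exact: AD.
- rewrite D_scale; exact: AZ.
- rewrite D_mul ?Gv_odd //; case: (Gv_anti n Gg) => s ->; rewrite scalA_mul /=.
  apply: inA_B; first exact: AZ.
  case: d hx IH => [|d] hx IH.
  + by have [c ->] := inA0 hx; rewrite D_C mulr0; apply: inA_0.
  + by apply: AM.
Qed.

Lemma odd_zero d : forall x m, inA Gv d x ->
  (forall i, (m <= i)%N -> e i * x + alpha x * e i = 0) -> x = 0.
Proof.
elim: d => [|d IH] x m hx h.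
  have [c cx] := inA0 hx; have := h m (leqnn m).
  rewrite cx aC mul_scalA scalA_mul => h2.
  have h3 : c%:A + c%:A = 0 :> A.
    by rewrite -scalerDl -(e_sq m) scalerAl scalerDl h2 mul0r.
  exact: half0.
have hy := D_deg m hx.
have hD : D (e m) x = e m * x + e m * x.
  rewrite /D; have -> : alpha x * e m = - (e m * x).
    by apply/eqP; rewrite -addr_eq0 addrC (h m (leqnn m)).
  by rewrite opprK.
have y0 : D (e m) x = 0.
  apply: (IH _ m.+1 hy) => i hi.
  have im : i != m by rewrite gtn_eqF.
  have key : e i * (e m * x) + (- e m * alpha x) * e i = - (e m * (e i * x + alpha x * e i)).
    by rewrite mulrA (e_anti im) !mulNr -!mulrA mulrDr opprD.
  rewrite hD aD HaM alpha_e mulrDr mulrDl addrACA key h ?mulr0 ?oppr0 ?addr0 //.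
  exact: ltnW hi.
have : e m * (e m * x + e m * x) = 0 by rewrite -hD y0 mulr0.
by rewrite mulrDr mulrA e_sq mul1r => /half0.
Qed.

Definition Gk (us : nat -> l2 R) k g := exists2 q, (q < k)%N & g = iota (us q).
Definition dual (us : nat -> l2 R) (Es : nat -> A) k := forall p q, (p < k)%N -> (q < k)%N ->
  Es p * iota (us q) + iota (us q) * Es p = ((p == q)%:R)%:A.

Lemma D_kill E G d y : (forall g, G g -> alpha g = - g /\ E * g + g * E = 0) ->
  inA G d y -> D E y = 0.
Proof.
move=> hG; elim=> {d y} [d|d x y _ IHx _ IHy|d c x _ IH|d g x Gg _ IH].
- exact: D_1.
- by rewrite D_add IHx IHy addr0.
- by rewrite D_scale IH scaler0.
- by case: (hG g Gg) => ha hE; rewrite D_mul // hE IH mul0r mulr0 subrr.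
Qed.

Lemma decomp us k d x : inA (Gk us k.+1) d x -> exists y z dy dz,
  [/\ inA (Gk us k) dy y, inA (Gk us k) dz z & x = y + iota (us k) * z].
Proof.
elim=> {d x} [d|d x y _ IHx _ IHy|d c x _ IH|d g x Gg _ IH].
- exists 1, 0, 0%N, 0%N; split; [exact: A1 | exact: inA_0 | by rewrite mulr0 addr0].
- case: IHx => [y1 [z1 [dy1 [dz1 [hy1 hz1 ->]]]]].
  case: IHy => [y2 [z2 [dy2 [dz2 [hy2 hz2 ->]]]]].
  exists (y1 + y2), (z1 + z2), (dy1 + dy2)%N, (dz1 + dz2)%N; split.
  + by apply: AD; [apply: (inA_mono hy1); rewrite leq_addr | apply: (inA_mono hy2); rewrite leq_addl].
  + by apply: AD; [apply: (inA_mono hz1); rewrite leq_addr | apply: (inA_mono hz2); rewrite leq_addl].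
  + by rewrite mulrDr addrACA.
- case: IH => [y1 [z1 [dy1 [dz1 [hy1 hz1 ->]]]]].
  exists (c *: y1), (c *: z1), dy1, dz1; split; try exact: AZ.
  by rewrite scalerDr scalerAr.
- case: IH => [y1 [z1 [dy1 [dz1 [hy1 hz1 ->]]]]].
  case: Gg => q; rewrite ltnS leq_eqVlt => /orP [/eqP -> | hq] ->.
  + exists ((qform (proj1_sig (us k))) *: z1), y1, dz1, dy1; split => //; first exact: AZ.
    by rewrite mulrDr mulrA Hsq scalA_mul addrC.
  + have [s hs] := anti_gen (us q) (us k).
    exists (iota (us q) * y1 + s *: z1), (- (iota (us q) * z1)), (dy1.+1 + dz1)%N, dz1.+1.
    split.
    * apply: AD; first by apply: (@inA_mono _ dy1.+1); [apply: AM => //; exists q | rewrite leq_addr].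
      by apply: AZ; apply: (inA_mono hz1); rewrite leq_addl.
    * by apply: inA_N; apply: AM => //; exists q.
    * have hgu : iota (us q) * iota (us k) = s%:A - iota (us k) * iota (us q).
        by rewrite -hs addrK.
      by rewrite mulrDr mulrA hgu mulrBl scalA_mul mulrN !mulrA addrA.
Qed.

Lemma elim_even k : forall us Es, dual us Es k -> forall d x, inA (Gk us k) d x ->
  (forall p, (p < k)%N -> Es p * x = alpha x * Es p) -> exists c, x = c%:A.
Proof.
elim: k => [|k IH] us Es hd d x hx hE.
  by apply: (inA_empty _ hx) => g [q].
have [y [z [dy [dz [hy hz ex]]]]] := decomp hx.
have hDy : D (Es k) y = 0.
  apply: (D_kill _ hy) => g [q hq ->]; split; first exact: Hai.
  by rewrite hd ?(gtn_eqF hq) ?scale0r // ltnS ltnW.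
have hDx : D (Es k) x = 0 by rewrite /D hE // subrr.
have z0 : z = 0.
  move: hDx; rewrite ex D_add hDy add0r D_mul ?Hai // hd // eqxx scale1r mul1r.
  by rewrite (D_kill _ hz) ?mulr0 ?subr0 // => g [q hq ->]; split; [exact: Hai | rewrite hd ?(gtn_eqF hq) ?scale0r // ltnS ltnW].
move: hE; rewrite ex z0 mulr0 addr0 => hE.
apply: (IH us Es _ dy y hy) => [p q hp hq|p hp].
  by apply: hd; apply: ltnW.
by apply: hE; apply: ltnW.
Qed.

Definition espan E := (forall a, (forall n, a * e n = e n * a) -> a * E = E * a) /\
  forall u, exists s, E * iota u + iota u * E = s%:A.

Lemma espan_e n : espan (e n).
Proof. by split=> [a ha|u]; [apply: ha | exists (2 * proj1_sig u n); apply: anti_e]. Qed.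

Lemma espan_lin c E1 E2 : espan E1 -> espan E2 -> espan (c *: E1 + E2).
Proof.
case=> h1 k1 [h2 k2]; split=> [a ha|u].
  by rewrite mulrDr mulrDl -scalerAr -scalerAl h1 // h2.
have [s1 hs1] := k1 u; have [s2 hs2] := k2 u.
exists (c * s1 + s2); rewrite mulrDl mulrDr addrACA -scalerAl -scalerAr -scalerDr hs1 hs2.
by rewrite scalerDl scalerA.
Qed.

Lemma espan_0 : espan 0.
Proof. by split=> [a _|u]; [rewrite mulr0 mul0r | exists 0; rewrite mulr0 mul0r addr0 scale0r]. Qed.

Lemma espan_sum k (c : nat -> R[i]) (Es : nat -> A) :
  (forall p, (p < k)%N -> espan (Es p)) -> espan (\sum_(p < k) c p *: Es p).
Proof.
move=> h; elim/big_ind: _ => //; first exact: espan_0.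
  by move=> x y hx hy; rewrite -[x]scale1r; apply: espan_lin.
move=> p _; rewrite -[_ *: _]addr0; apply: espan_lin; last exact: espan_0.
exact: h.
Qed.

Definition z0 : l2 R := exist _ (fun _ => 0) (@ell2_0 R).

Lemma lsum k (c : nat -> R[i]) (us : nat -> l2 R) :
  exists z : l2 R, iota z = \sum_(q < k) c q *: iota (us q).
Proof.
elim: k => [|k [z hz]].
  by exists z0; rewrite big_ord0; apply: iota_zero.
exists (lcomb (c k) (us k) z); rewrite iota_lcomb big_ord_recr /= hz addrC.
by [].
Qed.

Lemma anti_sumR E k (c : nat -> R[i]) (g : nat -> A) :
  E * (\sum_(q < k) c q *: g q) + (\sum_(q < k) c q *: g q) * E =
  \sum_(q < k) c q *: (E * g q + g q * E).
Proof.
rewrite mulr_sumr mulr_suml -big_split; apply: eq_bigr => q _.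
by rewrite -scalerAr -scalerAl scalerDr.
Qed.

Lemma anti_sumL g k (c : nat -> R[i]) (Es : nat -> A) :
  (\sum_(p < k) c p *: Es p) * g + g * (\sum_(p < k) c p *: Es p) =
  \sum_(p < k) c p *: (Es p * g + g * Es p).
Proof.
rewrite mulr_sumr mulr_suml -big_split; apply: eq_bigr => q _.
by rewrite -scalerAr -scalerAl scalerDr.
Qed.

Lemma sum_deltaL k (c : nat -> R[i]) p : (p < k)%N ->
  \sum_(q < k) c q *: ((p == q)%:R)%:A = (c p)%:A :> A.
Proof.
move=> hp; rewrite (bigD1 (Ordinal hp)) //= eqxx scale1r big1 ?addr0 //.
move=> q hq; case: eqP => [e1|_]; last by rewrite scale0r scaler0.
by case/eqP: hq; apply: val_inj; rewrite /= e1.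
Qed.

Lemma sum_deltaR k (c : nat -> R[i]) q : (q < k)%N ->
  \sum_(p < k) c p *: ((nat_of_ord p == q)%:R)%:A = (c q)%:A :> A.
Proof.
move=> hq; rewrite -(sum_deltaL c hq); apply: eq_bigr => p _; by rewrite eq_sym.
Qed.

Lemma anti_B (X Y g : A) : (X - Y) * g + g * (X - Y) = (X * g + g * X) - (Y * g + g * Y).
Proof. by rewrite mulrBl mulrBr addrACA opprD. Qed.

Lemma anti_Bg (E g h : A) : E * (g - h) + (g - h) * E = (E * g + g * E) - (E * h + h * E).
Proof. by rewrite mulrBl mulrBr addrACA opprD. Qed.

Lemma ltS_case p k : (p < k.+1)%N -> p = k \/ (p < k)%N.
Proof. by rewrite ltnS leq_eqVlt => /orP [/eqP|]; auto. Qed.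

Lemma GS (L : seq (l2 R)) : exists k us Es, [/\ dual us Es k,
  (forall p, (p < k)%N -> espan (Es p)) &
  (forall w, List.In w L -> exists c : nat -> R[i], iota w = \sum_(q < k) c q *: iota (us q))].
Proof.
elim: L => [|w L [k [us [Es [hd hE hL]]]]].
  exists 0%N, (fun _ => z0), (fun _ => 0); split => // p q //.
have [s hs] : exists s : nat -> R[i], forall q, (q < k)%N ->
    Es q * iota w + iota w * Es q = (s q)%:A.
  have hc : forall q, exists s, (q < k)%N -> Es q * iota w + iota w * Es q = s%:A.
    move=> q; case: (ltnP q k) => hq; last by exists 0.
    by case: (hE q hq) => _ /(_ w) [s' hs']; exists s'.
  by case: (choice hc) => f hf; exists f.
have [z hz] := lsum k s us.
pose w' := lcomb (-1) z w.
have hw' : iota w' = iota w - iota z by rewrite iota_lcomb scaleN1r addrC.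
have hEw' : forall p, (p < k)%N -> Es p * iota w' + iota w' * Es p = 0.
  move=> p hp; rewrite hw' anti_Bg hs // hz (anti_sumR (Es p) k s (fun q => iota (us q))).
  rewrite (eq_bigr (fun q : 'I_k => s q *: ((p == q)%:R)%:A)) ?sum_deltaL ?subrr //.
  by move=> q _; rewrite hd.
case: (pselect (forall n, proj1_sig w' n = 0)) => [allz|].
  have hwz : iota w = iota z by apply/eqP; rewrite -subr_eq0 -hw' iota_zero.
  exists k, us, Es; split => // v [<-|/hL //].
  by exists s; rewrite hwz.
move=> /existsNP [n hn].
pose b := (2 * proj1_sig w' n)^-1.
have hb : b * (2 * proj1_sig w' n) = 1 by rewrite mulVf // mulf_eq0 negb_or two_neq0; apply/eqP.
pose E0 := b *: e n.
have hE0 : forall u, E0 * iota u + iota u * E0 = (b * (2 * proj1_sig u n))%:A.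
  by move=> u; rewrite -scalerAl -scalerAr -scalerDr anti_e scalerA.
pose t := fun p => b * (2 * proj1_sig (us p) n).
pose S := \sum_(p < k) t p *: Es p.
pose E' := E0 - S.
exists k.+1, (fun q => if q == k then w' else us q), (fun q => if q == k then E' else Es q).
split.
- move=> p q /ltS_case [-> | hp] /ltS_case [-> | hq].
  + rewrite !eqxx anti_B hE0 hb (anti_sumL (iota w') k t Es).
    rewrite (eq_bigr (fun p' : 'I_k => 0)) ?big1 ?subr0 // => p' _.
    by rewrite hEw' ?scaler0.
  + rewrite eqxx (ltn_eqF hq) anti_B hE0 (anti_sumL (iota (us q)) k t Es).
    rewrite (eq_bigr (fun p' : 'I_k => t p' *: ((nat_of_ord p' == q)%:R)%:A)) ?sum_deltaR //.
      by rewrite subrr gtn_eqF // scale0r.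
    by move=> p' _; rewrite hd.
  + by rewrite eqxx (ltn_eqF hp) hEw' // scale0r.
  + by rewrite (ltn_eqF hp) (ltn_eqF hq) hd.
- move=> p /ltS_case [-> | hp].
    rewrite eqxx /E' /E0 -scaleN1r addrC.
    apply: espan_lin; first by apply: espan_sum.
    by rewrite -[_ *: e n]addr0; apply: espan_lin; [apply: espan_e | apply: espan_0].
  by rewrite (ltn_eqF hp); apply: hE.
- move=> v [<-|/hL [c hc]].
    exists (fun q => if q == k then 1 else s q).
    rewrite big_ord_recr /= eqxx scale1r.
    rewrite (eq_bigr (fun q : 'I_k => s q *: iota (us q))); last first.
      by move=> q _; rewrite /= (ltn_eqF (ltn_ord q)).
    by rewrite -hz hw' addrC subrK.
  exists (fun q => if q == k then 0 else c q).
  rewrite big_ord_recr /= eqxx scale0r addr0 hc.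
  by apply: eq_bigr => q _; rewrite /= (ltn_eqF (ltn_ord q)).
Qed.

Definition GL (L : seq (l2 R)) g := exists2 w, List.In w L & g = iota w.

Lemma inA_span G k (us : nat -> l2 R) d x :
  (forall g, G g -> exists c : nat -> R[i], g = \sum_(q < k) c q *: iota (us q)) ->
  inA G d x -> inA (Gk us k) d x.
Proof.
move=> hG; elim=> {d x} [d|d x y _ IHx _ IHy|d c x _ IH|d g x Gg _ IH].
- exact: A1.
- exact: AD.
- exact: AZ.
- have [c ->] := hG g Gg; rewrite mulr_suml; apply: inA_sum => q.
  by rewrite -scalerAl; apply: AZ; apply: AM => //; exists q.
Qed.

Lemma commZ (E x : A) c : x * E = E * x -> (c *: x) * E = E * (c *: x).
Proof. by move=> hx; rewrite -scalerAl -scalerAr hx. Qed.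
Lemma commD (E x y : A) : x * E = E * x -> y * E = E * y -> (x + y) * E = E * (x + y).
Proof. by move=> hx hy; rewrite mulrDl mulrDr hx hy. Qed.
Lemma comm_lin (E x y : A) c : x * E = E * x -> y * E = E * y ->
  (c *: x + y) * E = E * (c *: x + y).
Proof. by move=> hx hy; rewrite mulrDl mulrDr -scalerAl -scalerAr hx hy. Qed.

Lemma centralizer_scalar (Hgen : forall a, exists L d, inA (GL L) d a)
  (aa : forall x, alpha (alpha x) = x) (a : A) :
  (forall n, a * e n = e n * a) -> exists c, a = c%:A.
Proof.
move=> hcomm.
have [L [d ha]] := Hgen a.
have [k [us [Es [hd hE hL]]]] := GS L.
have ha' : inA (Gk us k) d a.
  by apply: (inA_span _ ha) => g [w /hL [c hc] ->]; exists c.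
have hcommA : forall n, alpha a * e n = e n * alpha a.
  move=> n; have := congr1 alpha (hcomm n); rewrite !HaM alpha_e mulrN mulNr.
  by move/eqP; rewrite eqr_opp => /eqP.
pose a0 := (2 : R[i])^-1 *: (a + alpha a).
pose a1 := (2 : R[i])^-1 *: (a - alpha a).
have ea : a = a0 + a1.
  rewrite /a0 /a1 -scalerDr addrACA subrr addr0.
  have -> : a + a = (2 : R[i]) *: a by rewrite scaler_nat [a *+ 2]mulr2n.
  by rewrite scalerA mulVf ?two_neq0 // scale1r.
have a0c : forall n, a0 * e n = e n * a0.
  by move=> n; rewrite /a0 commZ // commD // hcommA.
have a1c : forall n, a1 * e n = e n * a1.
  by move=> n; rewrite /a1 commZ // commD // -scaleN1r commZ // hcommA.
have alpha_a0 : alpha a0 = a0 by rewrite /a0 aZ aD aa addrC.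
have alpha_a1 : alpha a1 = - a1 by rewrite /a1 aZ aB aa -scalerN opprB.
have [c hc] : exists c, a0 = c%:A.
  apply: (elim_even hd (d := d)).
    by rewrite /a0; apply: AZ; apply: AD => //; apply: inA_alpha ha' => g [q _ ->]; apply: Hai.
  move=> p hp; rewrite alpha_a0; case: (hE p hp) => hc _.
  by symmetry; apply: hc.
have a10 : a1 = 0.
  apply: (odd_zero (d := d) (m := 0%N)).
    apply: (inA_sub (G := Gk us k)); first by move=> g [q _ ->]; exists (us q).
    by rewrite /a1; apply: AZ; apply: inA_B => //; apply: inA_alpha ha' => g [q _ ->]; apply: Hai.
  by move=> i _; rewrite alpha_a1 mulNr a1c subrr.
by exists c; rewrite ea hc a10 addr0.
Qed.

Definition Pgen x := exists L d, inA (GL L) d x.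

Lemma Pgen1 : Pgen 1.
Proof. by exists [::], 0%N; apply: A1. Qed.

Lemma GL_app_l L1 L2 g : GL L1 g -> GL (L1 ++ L2) g.
Proof. by case=> w hw ->; exists w => //; apply: List.in_or_app; left. Qed.
Lemma GL_app_r L1 L2 g : GL L2 g -> GL (L1 ++ L2) g.
Proof. by case=> w hw ->; exists w => //; apply: List.in_or_app; right. Qed.

Lemma PgenL c x y : Pgen x -> Pgen y -> Pgen (c *: x + y).
Proof.
case=> L1 [d1 h1] [L2 [d2 h2]]; exists (L1 ++ L2), (d1 + d2)%N; apply: AD.
  apply: AZ; apply: (inA_sub (@GL_app_l L1 L2)); apply: (inA_mono h1); exact: leq_addr.
apply: (inA_sub (@GL_app_r L1 L2)); apply: (inA_mono h2); exact: leq_addl.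
Qed.

Lemma PgenM x y : Pgen x -> Pgen y -> Pgen (x * y).
Proof.
case=> L1 [d1 h1] [L2 [d2 h2]]; exists (L1 ++ L2), (d1 + d2)%N; apply: inA_mul.
  exact: (inA_sub (@GL_app_l L1 L2)).
exact: (inA_sub (@GL_app_r L1 L2)).
Qed.

Lemma Pgen_iota u : Pgen (iota u).
Proof.
exists [:: u], 1%N; rewrite -[iota u]mulr1; apply: AM; last exact: A1.
by exists u => //; left.
Qed.
End Alg.


Section SubA.
Variables (R : realType) (A : algType R[i]) (iota : l2 R -> A).
Definition Sp : {pred A} := fun x => `[< Pgen iota x >].
Lemma Sp_closed : subalg_closed Sp.
Proof.
split; first by apply/asboolP; apply: Pgen1.
  by move=> c x y /asboolP Hx /asboolP Hy; apply/asboolP; apply: PgenL.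
by move=> x y /asboolP Hx /asboolP Hy; apply/asboolP; apply: PgenM.
Qed.
HB.instance Definition _ := GRing.isSubalgClosed.Build _ _ Sp (GRing.subalg_closed_semi Sp_closed).
Inductive SA := mkSA x & x \in Sp.
Definition vSA u := let: mkSA x _ := u in x.
HB.instance Definition _ := [isSub for vSA].
HB.instance Definition _ := [Choice of SA by <:].
HB.instance Definition _ := [SubChoice_isSubAlgebra of SA by <:].
Lemma vSA_M (x y : SA) : vSA (x * y) = vSA x * vSA y. Proof. by []. Qed.
Lemma vSA_L (c : R[i]) (x y : SA) : vSA (c *: x + y) = c *: vSA x + vSA y. Proof. by []. Qed.
Lemma vSA_Z (c : R[i]) (x : SA) : vSA (c *: x) = c *: vSA x. Proof. by []. Qed.
Lemma vSA_1 : vSA (1 : SA) = 1. Proof. by []. Qed.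
Lemma vSA_P (u : SA) : Pgen iota (vSA u).
Proof. by case: u => x /= /asboolP. Qed.
Lemma vSA_inj : injective vSA.
Proof. exact: val_inj. Qed.
Definition jSA (u : l2 R) : SA := @mkSA (iota u) (asboolT (Pgen_iota iota u)).
End SubA.

Unset Implicit Arguments.

Theorem proposition2 (R : realType) (A : algType R[i]) (iota : l2 R -> A) :
  is_clifford iota ->
  forall a : A,
    (forall i : nat, a * iota (basis_vec R i) = iota (basis_vec R i) * a) <->
    (exists c : R[i], a = c%:A).
Proof.
move=> [[Hlin Hsq] Huniv] a; split; last first.
  by case=> c -> i; rewrite scalA_mul mul_scalA.
move=> hcomm.
have cl_neg : clifford_map (fun x => - iota x).
  split; first by move=> c x y z hz; rewrite (Hlin _ _ _ _ hz) opprD scalerN.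
  by move=> x; rewrite mulrNN Hsq.
have [[alpha [[HaL [HaM Ha1]] Hai]] _] := Huniv A _ cl_neg.
have Hcl : clifford_map iota by split.
have huniq := (Huniv A iota Hcl).2.
have aa : forall x, alpha (alpha x) = x.
  apply: (huniq (fun x => alpha (alpha x)) id).
  - split; first by move=> c x y; rewrite !HaL.
    by split; [move=> x y; rewrite !HaM | rewrite !Ha1].
  - by [].
  - by move=> x; rewrite Hai (aN HaL) Hai opprK.
  - by [].
have hgen : forall x, Pgen iota x.
  have cl_j : clifford_map (jSA iota).
    split.
      move=> c x y z hz; apply: vSA_inj; rewrite vSA_L /=; exact: Hlin.
    move=> x; apply: vSA_inj; rewrite vSA_M vSA_Z vSA_1; exact: Hsq.
  have [[phi [[phL [phM ph1]] phi_i]] _] := Huniv _ _ cl_j.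
  move=> x; have <- : vSA (phi x) = x.
    apply: (huniq (fun y => vSA (phi y)) id) => //.
    - split; first by move=> c y z; rewrite phL vSA_L.
      by split; [move=> y z; rewrite phM vSA_M | rewrite ph1].
    - by move=> y; rewrite phi_i.
  exact: vSA_P.
exact: (centralizer_scalar Hlin Hsq HaL HaM Ha1 Hai hgen aa hcomm).
Qed.
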